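(* An abelian $\ell$-group with strong unit is a finitely presentable object of the category of abelian $\ell$-groups with strong unit (and unital $\ell$-group homomorphisms) if and only if it is finitely presentable (equivalently, finitely presented) as an abelian $\ell$-group with unit.
   Context: An abelian $\ell$-group with unit is an abelian group with a translation-invariant lattice order and a distinguished element $u\ge0$; the unit is strong if for every $x$ there is $n\in\mathbb{N}$ with $x\le nu$. Morphisms are lattice-ordered group homomorphisms preserving the unit. An object $M$ of a category is finitely presentable if $\mathrm{Hom}(M,-)$ preserves filtered colimits. *)

(* Defs.v *)
Set Implicit Arguments.
Unset Strict Implicit.

Record ULG := {
  car :> Type;
  zero : car;
  add : car -> car -> car;
  opp : car -> car;
  meet : car -> car -> car;
  join : car -> car -> car;
  unit : car;
  addA : forall x y z, add x (add y z) = add (add x y) z;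
  addC : forall x y, add x y = add y x;
  add0 : forall x, add zero x = x;
  addN : forall x, add (opp x) x = zero;
  meetC : forall x y, meet x y = meet y x;
  joinC : forall x y, join x y = join y x;
  meetA : forall x y z, meet x (meet y z) = meet (meet x y) z;
  joinA : forall x y z, join x (join y z) = join (join x y) z;
  meet_join : forall x y, meet x (join x y) = x;
  join_meet : forall x y, join x (meet x y) = x;
  (* translation invariance of the lattice order x <= y :<-> meet x y = x *)
  le_add : forall x y z, meet x y = x -> meet (add x z) (add y z) = add x z;
  unit_ge0 : meet zero unit = zero
}.

Definition leq (G : ULG) (x y : G) : Prop := meet x y = x.

Fixpoint nsmul (G : ULG) (n : nat) (x : G) : G :=
  match n with O => zero G | S m => add x (nsmul m x) end.

Definition strong_unit (G : ULG) : Prop :=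
  forall x : G, exists n : nat, leq x (nsmul n (unit G)).

Record UHom (A B : ULG) := {
  hfun :> A -> B;
  h_add : forall x y, hfun (add x y) = add (hfun x) (hfun y);
  h_meet : forall x y, hfun (meet x y) = meet (hfun x) (hfun y);
  h_join : forall x y, hfun (join x y) = join (hfun x) (hfun y);
  h_unit : hfun (unit A) = unit B
}.

Definition ucomp (A B C : ULG) (g : UHom B C) (f : UHom A B) : UHom A C.
Proof.
  refine {| hfun := fun x => g (f x) |}.
  - intros x y; rewrite (h_add f), (h_add g); reflexivity.
  - intros x y; rewrite (h_meet f), (h_meet g); reflexivity.
  - intros x y; rewrite (h_join f), (h_join g); reflexivity.
  - rewrite (h_unit f), (h_unit g); reflexivity.
Defined.

Record Cat := {
  ob : Type;
  hom : ob -> ob -> Type;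
  idc : forall a, hom a a;
  comp : forall a b c, hom b c -> hom a b -> hom a c;
  comp_id_l : forall a b (f : hom a b), comp (idc b) f = f;
  comp_id_r : forall a b (f : hom a b), comp f (idc a) = f;
  comp_assoc : forall a b c d (f : hom a b) (g : hom b c) (h : hom c d),
      comp h (comp g f) = comp (comp h g) f
}.

Definition filtered (C : Cat) : Prop :=
  inhabited (ob C) /\
  (forall a b : ob C, exists c, inhabited (hom a c) /\ inhabited (hom b c)) /\
  (forall (a b : ob C) (f g : hom a b),
      exists c (h : hom b c), comp h f = comp h g).

Record Diagram (C : Cat) := {
  dob : ob C -> ULG;
  dmap : forall a b, hom a b -> UHom (dob a) (dob b);
  dmap_id : forall a (x : dob a), dmap (idc a) x = x;
  dmap_comp : forall a b c (f : hom a b) (g : hom b c) (x : dob a),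
      dmap (comp g f) x = dmap g (dmap f x)
}.

Definition cocone (C : Cat) (D : Diagram C) (L : ULG)
    (lam : forall a, UHom (dob D a) L) : Prop :=
  forall a b (f : hom a b) (x : dob D a), lam b (dmap D f x) = lam a x.

(* (L, lam) is a colimit of D in the full subcategory of those unital
   l-groups satisfying P (P L is required separately). *)
Definition is_colimit_in (P : ULG -> Prop) (C : Cat) (D : Diagram C) (L : ULG)
    (lam : forall a, UHom (dob D a) L) : Prop :=
  cocone lam /\
  forall (N : ULG) (mu : forall a, UHom (dob D a) N), P N -> cocone mu ->
    (exists phi : UHom L N, forall a x, phi (lam a x) = mu a x) /\
    (forall phi psi : UHom L N,
        (forall a x, phi (lam a x) = mu a x) ->
        (forall a x, psi (lam a x) = mu a x) ->
        forall y, phi y = psi y).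

(* The image under Hom(M,-) of the cocone (L, lam) is a colimit in Set:
   universal property against every type X. *)
Definition hom_preserves (C : Cat) (D : Diagram C) (M L : ULG)
    (lam : forall a, UHom (dob D a) L) : Prop :=
  forall (X : Type) (c : forall a, UHom M (dob D a) -> X),
    (forall a b (f : hom a b) (g : UHom M (dob D a)),
        c b (ucomp (dmap D f) g) = c a g) ->
    (exists phi : UHom M L -> X,
        forall a (g : UHom M (dob D a)), phi (ucomp (lam a) g) = c a g) /\
    (forall phi psi : UHom M L -> X,
        (forall a g, phi (ucomp (lam a) g) = c a g) ->
        (forall a g, psi (ucomp (lam a) g) = c a g) ->
        forall h, phi h = psi h).

(* M is finitely presentable in the full subcategory of objects satisfying P
   (M itself is assumed to satisfy P where this is used): Hom(M,-)
   preserves all filtered colimits in that category. *)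
Definition fin_presentable_in (P : ULG -> Prop) (M : ULG) : Prop :=
  forall (C : Cat) (D : Diagram C) (L : ULG)
         (lam : forall a, UHom (dob D a) L),
    filtered C -> (forall a, P (dob D a)) -> P L ->
    is_colimit_in P lam -> hom_preserves M lam.

Definition strong_cat : ULG -> Prop := strong_unit.
Definition unital_cat : ULG -> Prop := fun _ => True.

(* Main.v *)
Require Import Defs.
From Stdlib Require Import ClassicalEpsilon ProofIrrelevance FunctionalExtensionality PropExtensionality Lia.
Set Implicit Arguments.
Unset Strict Implicit.

Lemma addr0 (G : ULG) (x : G) : add x (zero G) = x.
Proof. rewrite addC; apply add0. Qed.
Lemma addrN (G : ULG) (x : G) : add x (opp x) = zero G.
Proof. rewrite addC; apply addN. Qed.
Lemma add_cancel (G : ULG) (z x y : G) : add z x = add z y -> x = y.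
Proof.
  intro H. rewrite <- (add0 x), <- (add0 y), <- (addN z), <- !addA, H. reflexivity.
Qed.
Lemma inv_uniq (G : ULG) (a b : G) : add a b = zero G -> b = opp a.
Proof.
  intro H. apply (@add_cancel _ a). rewrite H, addrN. reflexivity.
Qed.
Lemma opp_opp (G : ULG) (x : G) : opp (opp x) = x.
Proof. symmetry. apply inv_uniq. apply addN. Qed.
Lemma opp_add (G : ULG) (x y : G) : opp (add x y) = add (opp x) (opp y).
Proof.
  symmetry. apply inv_uniq.
  rewrite (addC (opp x)), addA, <- (addA x y), addrN, addr0, addrN. reflexivity.
Qed.
Lemma opp0 (G : ULG) : opp (zero G) = zero G.
Proof. symmetry. apply inv_uniq. apply add0. Qed.

Lemma h_zero (A B : ULG) (h : UHom A B) : h (zero A) = zero B.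
Proof.
  apply (@add_cancel _ (h (zero A))). rewrite <- h_add, add0, addr0. reflexivity.
Qed.
Lemma h_opp (A B : ULG) (h : UHom A B) (x : A) : h (opp x) = opp (h x).
Proof.
  apply inv_uniq. rewrite <- h_add, addrN. apply h_zero.
Qed.
Lemma h_nsmul (A B : ULG) (h : UHom A B) n (x : A) : h (nsmul n x) = nsmul n (h x).
Proof.
  induction n; simpl. apply h_zero. rewrite h_add, IHn. reflexivity.
Qed.

Lemma meet_id (G : ULG) (x : G) : meet x x = x.
Proof.
  transitivity (meet x (join x (meet x x))). rewrite join_meet; reflexivity. apply meet_join.
Qed.
Lemma le_refl (G : ULG) (x : G) : leq x x.
Proof. apply meet_id. Qed.
Lemma le_trans (G : ULG) (x y z : G) : leq x y -> leq y z -> leq x z.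
Proof.
  unfold leq; intros H1 H2. rewrite <- H1, <- meetA, H2. reflexivity.
Qed.
Lemma le_antisym (G : ULG) (x y : G) : leq x y -> leq y x -> x = y.
Proof. unfold leq; intros H1 H2. rewrite <- H1. rewrite <- H2 at 2. apply meetC. Qed.
Lemma meet_le_l (G : ULG) (x y : G) : leq (meet x y) x.
Proof. unfold leq. rewrite (meetC x y), <- meetA, meet_id. reflexivity. Qed.
Lemma meet_le_r (G : ULG) (x y : G) : leq (meet x y) y.
Proof. unfold leq. rewrite <- meetA, meet_id. reflexivity. Qed.
Lemma le_meet (G : ULG) (x y z : G) : leq z x -> leq z y -> leq z (meet x y).
Proof. unfold leq; intros H1 H2. rewrite meetA, H1, H2. reflexivity. Qed.
Lemma le_join_iff (G : ULG) (x y : G) : leq x y <-> join x y = y.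
Proof.
  unfold leq; split; intro H.
  - rewrite <- H, joinC, meetC. apply join_meet.
  - rewrite <- H. apply meet_join.
Qed.
Lemma join_le_l (G : ULG) (x y : G) : leq x (join x y).
Proof. apply meet_join. Qed.
Lemma join_le_r (G : ULG) (x y : G) : leq y (join x y).
Proof. rewrite joinC. apply meet_join. Qed.
Lemma join_le (G : ULG) (x y z : G) : leq x z -> leq y z -> leq (join x y) z.
Proof.
  rewrite !le_join_iff; intros H1 H2. rewrite <- joinA, H2, H1. reflexivity.
Qed.
Lemma le_addr (G : ULG) (x y z : G) : leq x y -> leq (add x z) (add y z).
Proof. apply le_add. Qed.
Lemma le_addl (G : ULG) (x y z : G) : leq x y -> leq (add z x) (add z y).
Proof. intro H. rewrite !(addC z). apply le_add; auto. Qed.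
Lemma le_add2 (G : ULG) (a b c d : G) : leq a b -> leq c d -> leq (add a c) (add b d).
Proof.
  intros H1 H2. apply le_trans with (add b c). apply le_addr; auto. apply le_addl; auto.
Qed.
Lemma le_opp (G : ULG) (x y : G) : leq x y -> leq (opp y) (opp x).
Proof.
  intro H. apply (@le_addr _ _ _ (add (opp x) (opp y))) in H.
  rewrite addA, addrN, add0 in H.
  rewrite (addC (opp x)), addA, addrN, add0 in H. exact H.
Qed.
Lemma h_le (A B : ULG) (h : UHom A B) (x y : A) : leq x y -> leq (h x) (h y).
Proof. unfold leq; intro H. rewrite <- h_meet, H. reflexivity. Qed.
Lemma nsmul_add (G : ULG) n m (x : G) : nsmul (n + m) x = add (nsmul n x) (nsmul m x).
Proof.
  induction n; simpl. symmetry; apply add0. rewrite IHn, addA. reflexivity.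
Qed.
Lemma nsmul_ge0 (G : ULG) n : leq (zero G) (nsmul n (unit G)).
Proof.
  induction n; simpl. apply le_refl.
  rewrite <- (add0 (zero G)). apply le_add2. apply unit_ge0. exact IHn.
Qed.
Lemma nsmul_mono (G : ULG) n m : n <= m -> leq (nsmul n (unit G)) (nsmul m (unit G)).
Proof.
  induction 1 as [|k Hk IH]. apply le_refl.
  apply le_trans with (1 := IH). simpl.
  rewrite <- (add0 (nsmul k (unit G))) at 1. apply le_addr. apply unit_ge0.
Qed.

Definition bnd (G : ULG) (x : G) : Prop :=
  exists n, leq x (nsmul n (unit G)) /\ leq (opp x) (nsmul n (unit G)).

Lemma bnd_up (G : ULG) (x : G) n m : n <= m ->
  leq x (nsmul n (unit G)) /\ leq (opp x) (nsmul n (unit G)) ->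
  leq x (nsmul m (unit G)) /\ leq (opp x) (nsmul m (unit G)).
Proof.
  intros Hnm [H1 H2]; split; eapply le_trans; eauto; apply nsmul_mono; auto.
Qed.

Lemma bnd_zero (G : ULG) : bnd (zero G).
Proof. exists 0; simpl; rewrite opp0; split; apply le_refl. Qed.
Lemma bnd_unit (G : ULG) : bnd (unit G).
Proof.
  exists 1; simpl; rewrite addr0; split. apply le_refl.
  apply le_trans with (zero G). rewrite <- opp0. apply le_opp. apply unit_ge0.
  apply unit_ge0.
Qed.
Lemma bnd_add (G : ULG) (x y : G) : bnd x -> bnd y -> bnd (add x y).
Proof.
  intros [n [H1 H2]] [m [H3 H4]]. exists (n + m). rewrite nsmul_add, opp_add.
  split; apply le_add2; auto.
Qed.
Lemma bnd_opp (G : ULG) (x : G) : bnd x -> bnd (opp x).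
Proof. intros [n [H1 H2]]. exists n. rewrite opp_opp. split; auto. Qed.
Lemma lower (G : ULG) (x a : G) : leq (opp x) a -> leq (opp a) x.
Proof. intro H. apply le_opp in H. rewrite opp_opp in H. exact H. Qed.
Lemma upper (G : ULG) (x a : G) : leq (opp a) x -> leq (opp x) a.
Proof. intro H. apply le_opp in H. rewrite opp_opp in H. exact H. Qed.
Lemma bnd_meet (G : ULG) (x y : G) : bnd x -> bnd y -> bnd (meet x y).
Proof.
  intros [n Hn] [m Hm]. exists (n + m).
  destruct (bnd_up (n := n) (m := n + m) ltac:(lia) Hn) as [H1 H2].
  destruct (bnd_up (n := m) (m := n + m) ltac:(lia) Hm) as [H3 H4].
  split. eapply le_trans. apply meet_le_l. auto.
  apply upper. apply le_meet; apply lower; auto.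
Qed.
Lemma bnd_join (G : ULG) (x y : G) : bnd x -> bnd y -> bnd (join x y).
Proof.
  intros [n Hn] [m Hm]. exists (n + m).
  destruct (bnd_up (n := n) (m := n + m) ltac:(lia) Hn) as [H1 H2].
  destruct (bnd_up (n := m) (m := n + m) ltac:(lia) Hm) as [H3 H4].
  split. apply join_le; auto.
  apply upper. eapply le_trans. apply lower. apply H2. apply join_le_l.
Qed.
Lemma strong_bnd (G : ULG) : strong_unit G -> forall x : G, bnd x.
Proof.
  intros HG x. destruct (HG x) as [n Hn]. destruct (HG (opp x)) as [m Hm].
  exists (n + m). split; (eapply le_trans; [eassumption| apply nsmul_mono; lia]).
Qed.
Lemma h_bnd (A B : ULG) (h : UHom A B) (x : A) : bnd x -> bnd (h x).
Proof.
  intros [n [H1 H2]]. exists n. rewrite <- h_opp, <- (h_unit h), <- h_nsmul.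
  split; apply h_le; auto.
Qed.

Lemma sig_eq (A : Type) (P : A -> Prop) (a b : {x : A | P x}) :
  proj1_sig a = proj1_sig b -> a = b.
Proof.
  destruct a as [a pa], b as [b pb]; simpl; intro e; subst.
  f_equal; apply proof_irrelevance.
Qed.

Definition Sc (N : ULG) := {x : N | bnd x}.

Definition SG (N : ULG) : ULG.
Proof.
  refine {| car := Sc N;
    zero := exist _ (zero N) (bnd_zero N);
    add := fun a b => exist _ (add (proj1_sig a) (proj1_sig b)) (bnd_add (proj2_sig a) (proj2_sig b));
    opp := fun a => exist _ (opp (proj1_sig a)) (bnd_opp (proj2_sig a));
    meet := fun a b => exist _ (meet (proj1_sig a) (proj1_sig b)) (bnd_meet (proj2_sig a) (proj2_sig b));
    join := fun a b => exist _ (join (proj1_sig a) (proj1_sig b)) (bnd_join (proj2_sig a) (proj2_sig b));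
    unit := exist _ (unit N) (bnd_unit N) |}.
  all: intros; try apply sig_eq; simpl.
  - apply addA.
  - apply addC.
  - apply add0.
  - apply addN.
  - apply meetC.
  - apply joinC.
  - apply meetA.
  - apply joinA.
  - apply meet_join.
  - apply join_meet.
  - match goal with H : _ = _ |- _ => apply (f_equal (@proj1_sig _ _)) in H; simpl in H end.
    apply le_add. exact H.
  - apply unit_ge0.
Defined.

Lemma SG_nsmul (N : ULG) n : proj1_sig (nsmul n (unit (SG N))) = nsmul n (unit N).
Proof. induction n; simpl. reflexivity. f_equal. exact IHn. Qed.

Lemma SG_strong (N : ULG) : strong_unit (SG N).
Proof.
  intros [x [n [H1 H2]]]. exists n. unfold leq. apply sig_eq.
  change (meet x (proj1_sig (nsmul n (unit (SG N))))  = x).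
  transitivity (meet x (nsmul n (unit N))); [f_equal; apply SG_nsmul | exact H1].
Qed.

Definition incl (N : ULG) : UHom (SG N) N.
Proof.
  refine {| hfun := fun a : SG N => proj1_sig a |}; intros; reflexivity.
Defined.

Definition coS (A N : ULG) (HA : strong_unit A) (h : UHom A N) : UHom A (SG N).
Proof.
  refine {| hfun := fun x => exist _ (h x) (h_bnd h (strong_bnd HA x)) : SG N |};
  intros; apply sig_eq; simpl.
  apply h_add. apply h_meet. apply h_join. apply h_unit.
Defined.

Lemma coS_val (A N : ULG) (HA : strong_unit A) (h : UHom A N) x :
  proj1_sig (coS HA h x) = h x.
Proof. reflexivity. Qed.

Definition resS (A B : ULG) (h : UHom A B) : UHom (SG A) (SG B) :=
  coS (@SG_strong A) (ucomp h (incl A)).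

Lemma uhom_ext (A B : ULG) (f g : UHom A B) : (forall x, f x = g x) -> f = g.
Proof.
  destruct f as [f f1 f2 f3 f4], g as [g g1 g2 g3 g4]; simpl; intro H.
  assert (f = g) by (apply functional_extensionality; auto). subst.
  f_equal; apply proof_irrelevance.
Qed.

Definition idU (A : ULG) : UHom A A.
Proof. refine {| hfun := fun x => x |}; intros; reflexivity. Defined.


Lemma strong_colim_unital (C : Cat) (D : Diagram C) (L : ULG)
  (lam : forall a, UHom (dob D a) L) :
  (forall a, strong_unit (dob D a)) -> strong_unit L ->
  is_colimit_in strong_cat lam -> is_colimit_in unital_cat lam.
Proof.
  intros HD HL [Hc Hu]. split; [exact Hc|].
  intros N mu _ Hmu.
  set (mu' := fun a => coS (HD a) (mu a)).
  assert (Hmu' : cocone mu').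
  { intros a b f x. apply sig_eq. simpl. apply Hmu. }
  destruct (Hu (SG N) mu' (@SG_strong N) Hmu') as [[phi Hphi] Huniq].
  split.
  - exists (ucomp (incl N) phi). intros a x. simpl. rewrite Hphi. reflexivity.
  - intros phi1 psi1 H1 H2 y.
    assert (E := Huniq (coS HL phi1) (coS HL psi1)).
    assert (E' : coS HL phi1 y = coS HL psi1 y).
    { apply E; intros a x; apply sig_eq; simpl; auto. }
    apply (f_equal (@proj1_sig _ _)) in E'. exact E'.
Qed.

Lemma dir_back (M : ULG) :
  fin_presentable_in unital_cat M -> fin_presentable_in strong_cat M.
Proof.
  intros H C D L lam Hf HD HL Hcol.
  apply (H C D L lam Hf); try (intros; exact I).
  apply strong_colim_unital; auto.
Qed.


Definition Eprop (C : Cat) (D : Diagram C) (L : ULG)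
  (lam : forall a, UHom (dob D a) L) : Prop :=
  forall y : L, exists a (x : dob D a), lam a x = y.
Definition Jprop (C : Cat) (D : Diagram C) (L : ULG)
  (lam : forall a, UHom (dob D a) L) : Prop :=
  forall a b (x : dob D a) (y : dob D b), lam a x = lam b y ->
  exists c (f : hom a c) (g : hom b c), dmap D f x = dmap D g y.

Lemma two_common (C : Cat) (D : Diagram C) (L : ULG)
  (lam : forall a, UHom (dob D a) L) :
  filtered C -> cocone lam -> Eprop lam ->
  forall y1 y2 : L, exists c (x1 x2 : dob D c), lam c x1 = y1 /\ lam c x2 = y2.
Proof.
  intros [_ [Hf2 _]] Hc HE y1 y2.
  destruct (HE y1) as [a [x1 <-]]. destruct (HE y2) as [b [x2 <-]].
  destruct (Hf2 a b) as [c [[f] [g]]].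
  exists c, (dmap D f x1), (dmap D g x2). split; apply Hc.
Qed.

Definition pick_pa (C : Cat) (D : Diagram C) (L : ULG)
  (lam : forall a, UHom (dob D a) L) (HE : Eprop lam) (y : L) : ob C :=
  proj1_sig (constructive_indefinite_description _ (HE y)).
Definition pick_px (C : Cat) (D : Diagram C) (L : ULG)
  (lam : forall a, UHom (dob D a) L) (HE : Eprop lam) (y : L) : dob D (pick_pa HE y) :=
  proj1_sig (constructive_indefinite_description _
     (proj2_sig (constructive_indefinite_description _ (HE y)))).
Lemma pick_spec (C : Cat) (D : Diagram C) (L : ULG)
  (lam : forall a, UHom (dob D a) L) (HE : Eprop lam) (y : L) :
  lam (pick_pa HE y) (pick_px HE y) = y.
Proof.
  unfold pick_px, pick_pa.
  exact (proj2_sig (constructive_indefinite_description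
    (fun x => lam _ x = y)
    (proj2_sig (constructive_indefinite_description _ (HE y))))).
Qed.

Lemma CE (C : Cat) (D : Diagram C) (L : ULG)
  (lam : forall a, UHom (dob D a) L) (P : ULG -> Prop) :
  filtered C -> cocone lam -> Eprop lam -> Jprop lam -> is_colimit_in P lam.
Proof.
  intros Hf Hc HE HJ. split; [exact Hc|].
  intros N mu _ Hmu.
  assert (WD : forall a b x y, lam a x = lam b y -> mu a x = mu b y).
  { intros a b x y H. destruct (HJ a b x y H) as [c [f [g Hfg]]].
    rewrite <- (Hmu a c f x), <- (Hmu b c g y), Hfg. reflexivity. }
  set (F := fun y => mu (pick_pa HE y) (pick_px HE y)).
  assert (FS : forall a x, F (lam a x) = mu a x).
  { intros a x. unfold F. apply WD. apply pick_spec. }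
  split.
  - assert (Fadd : forall y1 y2, F (add y1 y2) = add (F y1) (F y2)).
    { intros y1 y2. destruct (two_common Hf Hc HE y1 y2) as [c [x1 [x2 [<- <-]]]].
      rewrite <- h_add, !FS, h_add. reflexivity. }
    assert (Fmeet : forall y1 y2, F (meet y1 y2) = meet (F y1) (F y2)).
    { intros y1 y2. destruct (two_common Hf Hc HE y1 y2) as [c [x1 [x2 [<- <-]]]].
      rewrite <- h_meet, !FS, h_meet. reflexivity. }
    assert (Fjoin : forall y1 y2, F (join y1 y2) = join (F y1) (F y2)).
    { intros y1 y2. destruct (two_common Hf Hc HE y1 y2) as [c [x1 [x2 [<- <-]]]].
      rewrite <- h_join, !FS, h_join. reflexivity. }
    assert (Funit : F (unit L) = unit N).
    { destruct Hf as [[a0] _]. rewrite <- (h_unit (lam a0)), FS, h_unit. reflexivity. }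
    exists {| hfun := F; h_add := Fadd; h_meet := Fmeet; h_join := Fjoin; h_unit := Funit |}.
    intros a x. apply FS.
  - intros phi psi H1 H2 y. destruct (HE y) as [a [x <-]]. rewrite H1, H2. reflexivity.
Qed.


Definition TT (C : Cat) (D : Diagram C) := {a : ob C & dob D a}.
Definition RR (C : Cat) (D : Diagram C) (s t : TT D) : Prop :=
  exists c (f : hom (projT1 s) c) (g : hom (projT1 t) c),
    dmap D f (projT2 s) = dmap D g (projT2 t).

Lemma ext1 (C : Cat) (Hf : filtered C) (a c0 c : ob C) (f0 : hom a c0) (f : hom a c) :
  exists d (h0 : hom c0 d) (h : hom c d), comp h0 f0 = comp h f.
Proof.
  destruct Hf as [_ [H2 H3]].
  destruct (H2 c0 c) as [d1 [[k0] [k]]].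
  destruct (H3 _ _ (comp k0 f0) (comp k f)) as [e [w Hw]].
  exists e, (comp w k0), (comp w k). rewrite <- !comp_assoc. exact Hw.
Qed.

Lemma EQ_any (C : Cat) (D : Diagram C) (Hf : filtered C) (a b : ob C) (x : dob D a) (y : dob D b) :
  RR (existT _ a x) (existT _ b y) ->
  forall (c : ob C) (f : hom a c) (g : hom b c),
  exists e (h : hom c e), dmap D h (dmap D f x) = dmap D h (dmap D g y).
Proof.
  intros [d [f' [g' Hd]]] c f g; simpl in *.
  destruct (ext1 Hf f f') as [d1 [u [v Huv]]].
  destruct Hf as [_ [_ H3]].
  destruct (H3 _ _ (comp u g) (comp v g')) as [e [w Hw]].
  exists e, (comp w u).
  assert (A1 : dmap D u (dmap D f x) = dmap D v (dmap D f' x))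
    by (rewrite <- !dmap_comp, Huv; reflexivity).
  assert (A2 : dmap D w (dmap D u (dmap D g y)) = dmap D w (dmap D v (dmap D g' y)))
    by (rewrite <- !dmap_comp, <- !comp_assoc, Hw; reflexivity).
  rewrite !dmap_comp, A1, A2, Hd. reflexivity.
Qed.

Lemma RR_refl (C : Cat) (D : Diagram C) (s : TT D) : RR s s.
Proof. exists (projT1 s), (idc _), (idc _). reflexivity. Qed.
Lemma RR_sym (C : Cat) (D : Diagram C) (s t : TT D) : RR s t -> RR t s.
Proof. intros [c [f [g H]]]. exists c, g, f. auto. Qed.
Lemma RR_trans (C : Cat) (D : Diagram C) (Hf : filtered C) (s t u : TT D) :
  RR s t -> RR t u -> RR s u.
Proof.
  intros [c1 [f1 [g1 H1]]] [c2 [f2 [g2 H2]]].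
  destruct (ext1 Hf g1 f2) as [d [h1 [h2 Hh]]].
  exists d, (comp h1 f1), (comp h2 g2).
  rewrite !dmap_comp, H1, <- H2, <- !dmap_comp, Hh. reflexivity.
Qed.
Lemma RR_push (C : Cat) (D : Diagram C) (a c : ob C) (f : hom a c) (x : dob D a) :
  RR (existT _ a x) (existT _ c (dmap D f x)).
Proof. exists c, f, (idc c). simpl. rewrite dmap_id. reflexivity. Qed.

Definition Qc (C : Cat) (D : Diagram C) := {P : TT D -> Prop | exists t, P = RR t}.
Definition cl (C : Cat) (D : Diagram C) (t : TT D) : Qc D :=
  exist _ (RR t) (ex_intro _ t eq_refl).

Lemma cl_eq (C : Cat) (D : Diagram C) (Hf : filtered C) (s t : TT D) :
  RR s t -> cl s = cl t.
Proof.
  intro H. apply sig_eq. simpl. apply functional_extensionality. intro u.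
  apply propositional_extensionality. split; intro H'.
  - apply (RR_trans Hf (RR_sym H) H').
  - apply (RR_trans Hf H H').
Qed.
Lemma cl_inv (C : Cat) (D : Diagram C) (s t : TT D) : cl s = cl t -> RR s t.
Proof.
  intro H. apply (f_equal (@proj1_sig _ _)) in H. simpl in H. rewrite H. apply RR_refl.
Qed.
Lemma cl_surj (C : Cat) (D : Diagram C) (p : Qc D) : exists t, p = cl t.
Proof.
  destruct p as [P [t e]]. exists t. apply sig_eq. simpl. exact e.
Qed.
Definition rep (C : Cat) (D : Diagram C) (p : Qc D) : TT D :=
  proj1_sig (constructive_indefinite_description _ (cl_surj p)).
Lemma rep_spec (C : Cat) (D : Diagram C) (p : Qc D) : p = cl (rep p).
Proof. unfold rep. exact (proj2_sig (constructive_indefinite_description _ (cl_surj p))). Qed.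
Lemma rep_cl (C : Cat) (D : Diagram C) (t : TT D) : RR (rep (cl t)) t.
Proof. apply cl_inv. rewrite <- rep_spec. reflexivity. Qed.

Lemma cl_push (C : Cat) (D : Diagram C) (Hf : filtered C) (a c : ob C) (f : hom a c) (x : dob D a) :
  cl (existT _ a x) = cl (existT (fun a => car (dob D a)) c (dmap D f x)).
Proof. apply cl_eq; auto. apply RR_push. Qed.

Lemma up2_ex (C : Cat) (Hf : filtered C) (a b : ob C) :
  exists p : {c : ob C & (hom a c * hom b c)%type}, True.
Proof.
  destruct Hf as [_ [H2 _]]. destruct (H2 a b) as [c [[f] [g]]].
  exists (existT _ c (f, g)). exact I.
Qed.
Definition up2 (C : Cat) (Hf : filtered C) (a b : ob C) : {c : ob C & (hom a c * hom b c)%type} :=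
  proj1_sig (constructive_indefinite_description _ (up2_ex Hf a b)).
Lemma ob_ex (C : Cat) (Hf : filtered C) : exists a : ob C, True.
Proof. destruct Hf as [[a] _]. exists a; exact I. Qed.
Definition ob0 (C : Cat) (Hf : filtered C) : ob C :=
  proj1_sig (constructive_indefinite_description _ (ob_ex Hf)).

Definition bpres (bop : forall G : ULG, G -> G -> G) : Prop :=
  forall (A B : ULG) (h : UHom A B) (x y : A), h (bop A x y) = bop B (h x) (h y).

Definition liftQ (bop : forall G : ULG, G -> G -> G) (C : Cat) (D : Diagram C)
  (Hf : filtered C) (p1 p2 : Qc D) : Qc D :=
  let s := rep p1 in let t := rep p2 in let u := up2 Hf (projT1 s) (projT1 t) in
  cl (existT (fun a => car (dob D a)) (projT1 u)
        (bop _ (dmap D (fst (projT2 u)) (projT2 s)) (dmap D (snd (projT2 u)) (projT2 t)))).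

Lemma liftQ_same (bop : forall G : ULG, G -> G -> G) (Hb : bpres bop)
  (C : Cat) (D : Diagram C) (Hf : filtered C) (c : ob C) (x y : dob D c) :
  liftQ bop Hf (cl (existT _ c x)) (cl (existT _ c y)) = cl (existT _ c (bop _ x y)).
Proof.
  unfold liftQ.
  generalize (rep_cl (existT _ c x)) (rep_cl (existT _ c y)).
  destruct (rep (cl (existT _ c x))) as [a xs].
  destruct (rep (cl (existT _ c y))) as [b yt].
  intros Hs Ht. simpl.
  destruct (up2 Hf a b) as [c1 [f g]]. simpl.
  apply cl_eq; auto.
  pose proof Hf as [_ [H2 _]].
  destruct (H2 c1 c) as [c2 [[u0] [v0]]].
  destruct (EQ_any Hf Hs (comp u0 f) v0) as [e1 [h H1]].
  destruct (EQ_any Hf Ht (comp h (comp u0 g)) (comp h v0)) as [e2 [h' H2']].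
  exists e2, (comp h' (comp h u0)), (comp h' (comp h v0)). simpl.
  rewrite !Hb. repeat rewrite dmap_comp in H1. repeat rewrite dmap_comp in H2'. repeat rewrite dmap_comp. rewrite H1, H2'. reflexivity.
Qed.

Definition oppQ (C : Cat) (D : Diagram C) (p : Qc D) : Qc D :=
  let s := rep p in cl (existT (fun a => car (dob D a)) (projT1 s) (opp (projT2 s))).

Lemma oppQ_same (C : Cat) (D : Diagram C) (Hf : filtered C) (c : ob C) (x : dob D c) :
  oppQ (cl (existT _ c x)) = cl (existT _ c (opp x)).
Proof.
  unfold oppQ. generalize (rep_cl (existT _ c x)).
  destruct (rep (cl (existT _ c x))) as [a xs]. intros [d [f [g H]]]. simpl in *.
  apply cl_eq; auto. exists d, f, g. simpl. rewrite !h_opp, H. reflexivity.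
Qed.

Definition zeroQ (C : Cat) (D : Diagram C) (Hf : filtered C) : Qc D :=
  cl (existT (fun a => car (dob D a)) (ob0 Hf) (zero _)).
Definition unitQ (C : Cat) (D : Diagram C) (Hf : filtered C) : Qc D :=
  cl (existT (fun a => car (dob D a)) (ob0 Hf) (unit _)).

Lemma zero_at (C : Cat) (D : Diagram C) (Hf : filtered C) (c : ob C) :
  zeroQ D Hf = cl (existT _ c (zero _)).
Proof.
  apply cl_eq; auto. pose proof Hf as [_ [H2 _]].
  destruct (H2 (ob0 Hf) c) as [d [[f] [g]]]. exists d, f, g. simpl.
  rewrite !h_zero. reflexivity.
Qed.
Lemma unit_at (C : Cat) (D : Diagram C) (Hf : filtered C) (c : ob C) :
  unitQ D Hf = cl (existT _ c (unit _)).
Proof.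
  apply cl_eq; auto. pose proof Hf as [_ [H2 _]].
  destruct (H2 (ob0 Hf) c) as [d [[f] [g]]]. exists d, f, g. simpl.
  rewrite !h_unit. reflexivity.
Qed.

Lemma stage2 (C : Cat) (D : Diagram C) (Hf : filtered C) (p1 p2 : Qc D) :
  exists c (x1 x2 : dob D c), p1 = cl (existT _ c x1) /\ p2 = cl (existT _ c x2).
Proof.
  destruct (cl_surj p1) as [[a x1] ->]. destruct (cl_surj p2) as [[b x2] ->].
  pose proof Hf as [_ [H2 _]]. destruct (H2 a b) as [c [[f] [g]]].
  exists c, (dmap D f x1), (dmap D g x2). split; apply cl_push; auto.
Qed.
Lemma stage3 (C : Cat) (D : Diagram C) (Hf : filtered C) (p1 p2 p3 : Qc D) :
  exists c (x1 x2 x3 : dob D c),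
    p1 = cl (existT _ c x1) /\ p2 = cl (existT _ c x2) /\ p3 = cl (existT _ c x3).
Proof.
  destruct (stage2 Hf p1 p2) as [a [x1 [x2 [-> ->]]]].
  destruct (cl_surj p3) as [[b x3] ->].
  pose proof Hf as [_ [H2 _]]. destruct (H2 a b) as [c [[f] [g]]].
  exists c, (dmap D f x1), (dmap D f x2), (dmap D g x3).
  split; [|split]; apply cl_push; auto.
Qed.

Lemma same_stage_eq (C : Cat) (D : Diagram C) (Hf : filtered C) (c : ob C) (x y : dob D c) :
  cl (existT _ c x) = cl (existT _ c y) -> exists e (k : hom c e), dmap D k x = dmap D k y.
Proof.
  intro H. apply cl_inv in H. destruct H as [d [f [g H]]]. simpl in *.
  pose proof Hf as [_ [_ H3]]. destruct (H3 _ _ f g) as [e [h Hh]].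
  exists e, (comp h f). rewrite dmap_comp, H, <- dmap_comp, Hh. reflexivity.
Qed.

Lemma add_pres : bpres (fun G => @add G).
Proof. intros A B h x y. apply h_add. Qed.
Lemma meet_pres : bpres (fun G => @meet G).
Proof. intros A B h x y. apply h_meet. Qed.
Lemma join_pres : bpres (fun G => @join G).
Proof. intros A B h x y. apply h_join. Qed.

Ltac st1 Hf p := destruct (cl_surj p) as [[? ?] ->].
Ltac st2 Hf p1 p2 := destruct (stage2 Hf p1 p2) as [? [? [? [-> ->]]]].
Ltac st3 Hf p1 p2 p3 := destruct (stage3 Hf p1 p2 p3) as [? [? [? [? [-> [-> ->]]]]]].

Definition QG (C : Cat) (D : Diagram C) (Hf : filtered C) : ULG.
Proof.
  refine {| car := Qc D;
    zero := zeroQ D Hf;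
    add := liftQ (fun G => @add G) Hf;
    opp := @oppQ C D;
    meet := liftQ (fun G => @meet G) Hf;
    join := liftQ (fun G => @join G) Hf;
    unit := unitQ D Hf |}.
  - intros p1 p2 p3; st3 Hf p1 p2 p3.
    rewrite !(liftQ_same add_pres). rewrite addA. reflexivity.
  - intros p1 p2; st2 Hf p1 p2.
    rewrite !(liftQ_same add_pres). rewrite addC. reflexivity.
  - intros p; st1 Hf p. rewrite (zero_at _ Hf x).
    rewrite !(liftQ_same add_pres). rewrite add0. reflexivity.
  - intros p; st1 Hf p. rewrite (oppQ_same Hf). rewrite (zero_at _ Hf x).
    rewrite !(liftQ_same add_pres). rewrite addN. reflexivity.
  - intros p1 p2; st2 Hf p1 p2.
    rewrite !(liftQ_same meet_pres). rewrite meetC. reflexivity.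
  - intros p1 p2; st2 Hf p1 p2.
    rewrite !(liftQ_same join_pres). rewrite joinC. reflexivity.
  - intros p1 p2 p3; st3 Hf p1 p2 p3.
    rewrite !(liftQ_same meet_pres). rewrite meetA. reflexivity.
  - intros p1 p2 p3; st3 Hf p1 p2 p3.
    rewrite !(liftQ_same join_pres). rewrite joinA. reflexivity.
  - intros p1 p2; st2 Hf p1 p2.
    rewrite (liftQ_same join_pres), (liftQ_same meet_pres). rewrite meet_join. reflexivity.
  - intros p1 p2; st2 Hf p1 p2.
    rewrite (liftQ_same meet_pres), (liftQ_same join_pres). rewrite join_meet. reflexivity.
  - intros p1 p2 p3; st3 Hf p1 p2 p3. intro H.
    rewrite (liftQ_same meet_pres) in H.
    apply (same_stage_eq Hf) in H. destruct H as [e [k Hk]].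
    rewrite !(liftQ_same add_pres), (liftQ_same meet_pres).
    rewrite (cl_push Hf k), (cl_push Hf k (add _ _)).
    rewrite h_meet, !h_add. f_equal. f_equal. apply le_add.
    rewrite <- h_meet. exact Hk.
  - rewrite (unit_at _ Hf (ob0 Hf)). unfold zeroQ.
    rewrite (liftQ_same meet_pres), unit_ge0. reflexivity.
Defined.

Definition qU (C : Cat) (D : Diagram C) (Hf : filtered C) (a : ob C) : UHom (dob D a) (QG D Hf).
Proof.
  refine {| hfun := fun x => cl (existT (fun a => car (dob D a)) a x) : QG D Hf |}.
  - intros x y. simpl. rewrite (liftQ_same add_pres). reflexivity.
  - intros x y. simpl. rewrite (liftQ_same meet_pres). reflexivity.
  - intros x y. simpl. rewrite (liftQ_same join_pres). reflexivity.
  - simpl. symmetry. apply unit_at.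
Defined.

Lemma qU_cocone (C : Cat) (D : Diagram C) (Hf : filtered C) : cocone (qU D Hf).
Proof. intros a b f x. simpl. symmetry. apply cl_push; auto. Qed.
Lemma qU_E (C : Cat) (D : Diagram C) (Hf : filtered C) : Eprop (qU D Hf).
Proof. intro p. destruct (cl_surj p) as [[a x] ->]. exists a, x. reflexivity. Qed.
Lemma qU_J (C : Cat) (D : Diagram C) (Hf : filtered C) : Jprop (qU D Hf).
Proof. intros a b x y H. apply cl_inv in H. exact H. Qed.


Lemma unital_colim_EJ (C : Cat) (D : Diagram C) (L : ULG)
  (lam : forall a, UHom (dob D a) L) :
  filtered C -> is_colimit_in unital_cat lam -> Eprop lam /\ Jprop lam.
Proof.
  intros Hf [Hc Hu].
  destruct (Hu (QG D Hf) (qU D Hf) I (@qU_cocone C D Hf)) as [[k Hk] _].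
  destruct (CE unital_cat Hf (@qU_cocone C D Hf) (@qU_E C D Hf) (@qU_J C D Hf)) as [_ HQ].
  destruct (HQ L lam I Hc) as [[j Hj] _].
  assert (Hjk : forall y, j (k y) = y).
  { apply (proj2 (Hu L lam I Hc) (ucomp j k) (idU L)); intros; simpl.
    rewrite Hk, Hj. reflexivity. reflexivity. }
  split.
  - intro y. destruct (@qU_E C D Hf (k y)) as [a [x Hx]]. exists a, x.
    rewrite <- Hj, Hx, Hjk. reflexivity.
  - intros a b x y H. apply (@qU_J C D Hf). rewrite <- !Hk, H. reflexivity.
Qed.

Definition SD (C : Cat) (D : Diagram C) : Diagram C.
Proof.
  refine {| dob := fun a => SG (dob D a); dmap := fun a b f => resS (dmap D f) |}.
  - intros a x. apply sig_eq. simpl. apply dmap_id.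
  - intros a b c f g x. apply sig_eq. simpl. apply dmap_comp.
Defined.

Lemma dir_fwd (M : ULG) (hM : strong_unit M) :
  fin_presentable_in strong_cat M -> fin_presentable_in unital_cat M.
Proof.
  intros H C D L lam Hf _ _ Hcol.
  destruct (unital_colim_EJ Hf Hcol) as [HE HJ].
  set (lam' := fun a => resS (lam a) : UHom (dob (SD D) a) (SG L)).
  assert (Hc' : cocone lam').
  { intros a b f x. apply sig_eq. simpl. apply (proj1 Hcol). }
  assert (HE' : Eprop lam').
  { intros [y [n [H1 H2]]]. destruct (HE y) as [a [x <-]].
    set (u := nsmul n (unit (dob D a))).
    assert (Hb : bnd (join (meet x u) (opp u))).
    { exists n. fold u. split.
      - apply join_le. apply meet_le_r.
        apply le_trans with (zero _). rewrite <- opp0. apply le_opp. apply nsmul_ge0.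
        apply nsmul_ge0.
      - apply upper. apply join_le_r. }
    exists a, (exist _ _ Hb). apply sig_eq. simpl.
    unfold u. rewrite h_join, h_meet, h_opp, h_nsmul, h_unit, H1.
    rewrite joinC. apply le_join_iff. apply lower. exact H2. }
  assert (HJ' : Jprop lam').
  { intros a b [x px] [y py] E. apply (f_equal (@proj1_sig _ _)) in E. simpl in E.
    destruct (HJ _ _ _ _ E) as [c [f [g Hfg]]]. exists c, f, g.
    apply sig_eq. simpl. exact Hfg. }
  assert (Hcol' := CE strong_cat Hf Hc' HE' HJ').
  assert (HP := H C (SD D) (SG L) lam' Hf (fun a => @SG_strong _) (@SG_strong L) Hcol').
  intros X c Hcc.
  set (c' := fun a (g' : UHom M (SG (dob D a))) => c a (ucomp (incl _) g')).
  assert (Hcc' : forall a b (f : hom a b) (g : UHom M (dob (SD D) a)),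
            c' b (ucomp (dmap (SD D) f) g) = c' a g).
  { intros a b f g. unfold c'. rewrite <- (Hcc a b f (ucomp (incl _) g)).
    f_equal. apply uhom_ext. reflexivity. }
  destruct (HP X c' Hcc') as [[phi' Hphi'] Hu'].
  split.
  - exists (fun h => phi' (coS hM h)). intros a g.
    transitivity (phi' (ucomp (lam' a) (coS hM g))).
    { f_equal. apply uhom_ext. intro. apply sig_eq. reflexivity. }
    rewrite Hphi'. unfold c'. f_equal. apply uhom_ext. reflexivity.
  - intros phi psi H1 H2 h.
    assert (E := Hu' (fun h' => phi (ucomp (incl L) h')) (fun h' => psi (ucomp (incl L) h'))).
    assert (Eh : ucomp (incl L) (coS hM h) = h) by (apply uhom_ext; reflexivity).
    rewrite <- Eh. apply E.
    + intros a g. unfold c'. rewrite <- H1. f_equal. apply uhom_ext. reflexivity.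
    + intros a g. unfold c'. rewrite <- H2. f_equal. apply uhom_ext. reflexivity.
Qed.

Theorem proposition5p4 (M : ULG) (hM : strong_unit M) :
  fin_presentable_in strong_cat M <-> fin_presentable_in unital_cat M.
Proof.
  split. apply dir_fwd; auto. apply dir_back.
Qed.
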